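(* In the unweighted setting (all offline weights equal to $1$), any algorithm for two-stage bipartite matching with advice that is $R$-robust is at most $C$-consistent, where $R+C\le \tfrac32$. In other words, no algorithm is simultaneously $R$-robust and $C$-consistent with $R+C>\tfrac32$.
   Context: Setting (two-stage bipartite matching with advice). A bipartite graph $G=(D,S,E)$ has offline vertices $S$ with weights $w_j$ (here all $w_j=1$) and online vertices $D=D_1\sqcup D_2$ arriving in two stages; $E_k$ is the set of edges between $D_k$ and $S$. An algorithm sees $(D_1,S,E_1)$ and the advice (a matching $A\subseteq E_1$), irrevocably chooses a (possibly random, or fractional) matching in $E_1$, then sees $E_2$ and chooses a matching in $E_2$ on the remaining capacity; its value is the (expected) total weight of matched offline vertices. $\mathsf{OPT}(G)$ is the maximum weight of a matching in $G$; $\mathsf{ADVICE}(G,A)=\sum_{j\in S_1}w_j+\max\{\sum_{j\text{ covered by }M}w_j: M\subseteq E_2\text{ a matching covering no vertex of } S_1\}$, where $S_1$ is the set of offline vertices covered by $A$. An algorithm is $R$-robust if its value is $\ge R\cdot\mathsf{OPT}(G)$ for all $G,A$, and $C$-consistent if its value is $\ge C\cdot\mathsf{ADVICE}(G,A)$ for all $G,A$. *)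

(* Defs.v *)
From HB Require Import structures.
From mathcomp Require Import all_boot all_order all_algebra.
Set Implicit Arguments. Unset Strict Implicit. Unset Printing Implicit Defensive.
Import Order.TTheory GRing.Theory Num.Theory.
Local Open Scope ring_scope.

(* Bipartite edge relation between online side T and offline side U. *)
Definition brel (T U : finType) := T -> U -> bool.

Definition is_matching (T U : finType) (E : brel T U) (M : {set T * U}) : bool :=
  [forall e, (e \in M) ==> E e.1 e.2] &&
  [forall e, forall f, ((e \in M) && (f \in M) && ((e.1 == f.1) || (e.2 == f.2))) ==> (e == f)].

Definition max_matching (T U : finType) (E : brel T U) : nat :=
  \max_(M : {set T * U} | is_matching E M) #|M|.

(* Whole graph G: online vertices D = D1 + D2 = 'I_n1 + 'I_n2, offline S = 'I_m. *)
Definition full_edges n1 n2 m (E1 : brel 'I_n1 'I_m) (E2 : brel 'I_n2 'I_m)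
  : brel ('I_n1 + 'I_n2)%type 'I_m :=
  fun d s => match d with inl i => E1 i s | inr k => E2 k s end.

Definition OPT n1 n2 m (E1 : brel 'I_n1 'I_m) (E2 : brel 'I_n2 'I_m) : nat :=
  max_matching (full_edges E1 E2).

Definition advice_cover n1 m (A : {set 'I_n1 * 'I_m}) : {set 'I_m} :=
  [set j | [exists i, (i, j) \in A]].

Definition ADVICE n1 n2 m (E2 : brel 'I_n2 'I_m) (A : {set 'I_n1 * 'I_m}) : nat :=
  #|advice_cover A| +
  \max_(M : {set 'I_n2 * 'I_m} | is_matching E2 M &&
          [forall e, (e \in M) ==> (e.2 \notin advice_cover A)]) #|M|.

(* Randomized algorithms are covered via their expected (fractional) matchings. *)
Record algorithm (F : realFieldType) := Algorithm {
  stage1 : forall n1 m : nat, brel 'I_n1 'I_m -> {set 'I_n1 * 'I_m} ->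
           'I_n1 -> 'I_m -> F;
  stage2 : forall n1 m : nat, brel 'I_n1 'I_m -> {set 'I_n1 * 'I_m} ->
           forall n2 : nat, brel 'I_n2 'I_m -> 'I_n2 -> 'I_m -> F
}.

Definition frac_matching (F : realFieldType) (T U : finType) (E : brel T U)
    (cap : U -> F) (x : T -> U -> F) : Prop :=
  (forall i j, 0 <= x i j) /\
  (forall i j, ~~ E i j -> x i j = 0) /\
  (forall i, \sum_j x i j <= 1) /\
  (forall j, \sum_i x i j <= cap j).

Definition valid_algorithm (F : realFieldType) (alg : algorithm F) : Prop :=
  forall n1 n2 m (E1 : brel 'I_n1 'I_m) (E2 : brel 'I_n2 'I_m)
         (A : {set 'I_n1 * 'I_m}),
    is_matching E1 A ->
    let x := stage1 alg E1 A in
    let y := stage2 alg E1 A E2 in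
    frac_matching E1 (fun _ => 1) x /\
    frac_matching E2 (fun j => 1 - \sum_i x i j) y.

Definition alg_value (F : realFieldType) (alg : algorithm F) n1 n2 m
    (E1 : brel 'I_n1 'I_m) (E2 : brel 'I_n2 'I_m) (A : {set 'I_n1 * 'I_m}) : F :=
  \sum_i \sum_j stage1 alg E1 A i j + \sum_k \sum_j stage2 alg E1 A E2 k j.

Definition robust (F : realFieldType) (alg : algorithm F) (R : F) : Prop :=
  forall n1 n2 m (E1 : brel 'I_n1 'I_m) (E2 : brel 'I_n2 'I_m)
         (A : {set 'I_n1 * 'I_m}),
    is_matching E1 A -> R * (OPT E1 E2)%:R <= alg_value alg E1 E2 A.

Definition consistent (F : realFieldType) (alg : algorithm F) (C : F) : Prop :=
  forall n1 n2 m (E1 : brel 'I_n1 'I_m) (E2 : brel 'I_n2 'I_m)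
         (A : {set 'I_n1 * 'I_m}),
    is_matching E1 A -> C * (ADVICE E2 A)%:R <= alg_value alg E1 E2 A.

(* Main.v *)
Require Import Defs.
From HB Require Import structures.
From mathcomp Require Import all_boot all_order all_algebra.
From mathcomp Require Import lra.
Import Order.TTheory GRing.Theory Num.Theory.
Local Open Scope ring_scope.
Definition E1 : brel 'I_1 'I_2 := fun _ _ => true.
Definition E2a : brel 'I_1 'I_2 := fun _ s => s == ord0.
Definition E2b : brel 'I_1 'I_2 := fun _ s => s == ord_max.
Definition Adv : {set 'I_1 * 'I_2} := [set (ord0, ord0)].

Lemma ord1E (i : 'I_1) : i = ord0. Proof. by apply/val_inj; case: i => [[]]. Qed.

Lemma Adv_m : is_matching E1 Adv.
Proof.
apply/andP; split; apply/forallP => e; first by rewrite implybT.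
apply/forallP => f; rewrite !inE.
by apply/implyP => /andP[/andP[/eqP-> /eqP->] _].
Qed.

Lemma OPTa : (2 <= OPT E1 E2a)%N.
Proof.
set a : ('I_1 + 'I_1)%type * 'I_2 := (inl ord0, ord_max).
set b : ('I_1 + 'I_1)%type * 'I_2 := (inr ord0, ord0).
rewrite /OPT /max_matching; apply: (@leq_trans #|[set a; b]|); first by rewrite cards2.
apply: leq_bigmax_cond.
apply/andP; split; apply/forallP => e.
  by apply/implyP => /set2P[]->.
apply/forallP => f.
by apply/implyP => /andP[/andP[/set2P[]-> /set2P[]->] ].
Qed.

Lemma ADVb : (2 <= ADVICE E2b Adv)%N.
Proof.
rewrite /ADVICE.
have h1 : (0 < #|advice_cover Adv|)%N.
  apply/card_gt0P; exists ord0; rewrite inE. apply/existsP; exists ord0. by rewrite inE.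
have h2 : (1 <= \max_(M : {set 'I_1 * 'I_2} | is_matching E2b M &&
          [forall e, (e \in M) ==> (e.2 \notin advice_cover Adv)]) #|M|)%N.
  apply: (@leq_trans #|[set ((ord0 : 'I_1), (ord_max : 'I_2))]|); first by rewrite cards1.
  apply: leq_bigmax_cond.
  apply/andP; split; [apply/andP; split|]; apply/forallP => e.
  - by rewrite !inE; apply/implyP => /eqP->.
  - apply/forallP => f; rewrite !inE.
    by apply/implyP => /andP[/andP[/eqP-> /eqP->] _].
  - apply/implyP => /set1P->; rewrite inE /=.
    by apply/negP => /existsP[i]; rewrite inE xpair_eqE andbF.
exact: (leq_add h1 h2).
Qed.
Lemma sum12 (F : realFieldType) (f : 'I_1 -> 'I_2 -> F) :
  \sum_i \sum_j f i j = f ord0 ord0 + f ord0 ord_max.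
Proof.
rewrite big_ord1 big_ord_recr big_ord1 /=.
by congr (f _ _ + _); apply/val_inj.
Qed.

Lemma sum1 (F : realFieldType) (f : 'I_1 -> F) : \sum_i f i = f ord0.
Proof. by rewrite big_ord1. Qed.

Lemma sum2 (F : realFieldType) (f : 'I_2 -> F) : \sum_i f i = f ord0 + f ord_max.
Proof. rewrite big_ord_recr big_ord1 /=. by congr (f _ + _); apply/val_inj. Qed.

Theorem mainTheorem6 (F : realFieldType) (alg : algorithm F) (R C : F) :
  valid_algorithm alg -> robust alg R -> consistent alg C ->
  R + C <= 3 / 2.
Proof.
move=> hv hR hC.
have := hv 1%N 1%N 2%N E1 E2a Adv Adv_m.
move=> /= [[x0 [_ [xrow _]]] [y0 [yE [_ ycol]]]].
have := hv 1%N 1%N 2%N E1 E2b Adv Adv_m.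
move=> /= [_ [z0 [zE [_ zcol]]]].
have ra := hR 1%N 1%N 2%N E1 E2a Adv Adv_m.
have cb := hC 1%N 1%N 2%N E1 E2b Adv Adv_m.
move: ra cb; rewrite /alg_value !sum12.
set x := stage1 alg E1 Adv.
set y := stage2 alg E1 Adv E2a.
set z := stage2 alg E1 Adv E2b.
have r0 := xrow ord0; rewrite sum2 in r0.
have c0 := ycol ord0; rewrite !sum1 in c0.
have c1 := zcol ord_max; rewrite !sum1 in c1.
have e1 : y ord0 ord_max = 0 by apply: yE.
have e2 : z ord0 ord0 = 0 by apply: zE.
have := x0 ord0 ord0; have := x0 ord0 ord_max.
have := y0 ord0 ord0; have := z0 ord0 ord_max.
rewrite e1 e2.
move: OPTa ADVb.
move: (OPT E1 E2a) (ADVICE E2b Adv) => o a ho ha.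
have ho' : (2:F) <= o%:R by rewrite (ler_nat F 2 o).
have ha' : (2:F) <= a%:R by rewrite (ler_nat F 2 a).
move: (o%:R : F) (a%:R : F) ho' ha' => O A hO hA.
move=> h1 h2 h3 h4 hr hc.
rewrite -/x -/y -/z in r0 c0 c1 h1 h2 h3 h4.
have [R0|R0] := lerP 0 R; have [C0|C0] := lerP 0 C.
- have : R * 2 <= R * O by rewrite ler_wpM2l.
  have : C * 2 <= C * A by rewrite ler_wpM2l.
  lra.
- have : R * 2 <= R * O by rewrite ler_wpM2l.
  lra.
- have : C * 2 <= C * A by rewrite ler_wpM2l.
  lra.
- lra.
Qed.
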